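(* Let $A\in M_n(\mathcal F)$ be strongly nonsingular, i.e. $A^m$ is nonsingular for every $m\in\mathbb N$. Then $A$ has no nonzero degenerate generalized eigenvector: there is no nonzero tangible vector $v\in(\mathcal T\cup\{0_{\mathcal F}\})^n$ such that $A^mv\in(\mathcal G\cup\{0_{\mathcal F}\})^n$ for some $m\in\mathbb N$.
   Context: $\mathcal F=\mathcal T\cup\mathcal G\cup\{0_{\mathcal F}\}$ is the standard supertropical semifield: $\mathcal T$ is an ordered abelian group of tangible elements (written multiplicatively), $\mathcal G$ its ghost copy via $a\mapsto a^\nu$, $0_{\mathcal F}=-\infty$; $a+b$ is the element of larger $\nu$-value if these differ and $a+b=a^\nu$ if $a^\nu=b^\nu$; products multiply $\nu$-values and are tangible iff all factors are. $\det(A)=\sum_{\sigma\in S_n}\prod_ia_{i,\sigma(i)}$, and $A$ is nonsingular if $\det(A)\in\mathcal T$. A tangible vector $v$ is a degenerate generalized eigenvector of $A$ if $A^mv$ is ghost (all coordinates in $\mathcal G\cup\{0_{\mathcal F}\}$) for some $m$. *)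

(* Defs.v *)
From mathcomp Require Import all_boot all_order all_algebra all_fingroup.
Set Implicit Arguments. Unset Strict Implicit. Unset Printing Implicit Defensive.

Record ordAbGroup := OrdAbGroup {
  gcar :> eqType;
  gmul : gcar -> gcar -> gcar;
  gone : gcar;
  ginv : gcar -> gcar;
  gle  : rel gcar;
  gmulA : associative gmul;
  gmulC : commutative gmul;
  gmul1 : left_id gone gmul;
  gmulV : forall x, gmul (ginv x) x = gone;
  gle_refl : reflexive gle;
  gle_anti : antisymmetric gle;
  gle_trans : transitive gle;
  gle_total : total gle;
  gle_mul : forall x y z, gle x y -> gle (gmul z x) (gmul z y)
}.

(* Elements of F = T ∪ G ∪ {0_F}: tangible [Tan a], ghost [Gho a] = a^nu,
   and the zero element [Zero] = -oo. *)
Inductive stF (T : ordAbGroup) : Type :=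
| Zero : stF T
| Tan : gcar T -> stF T
| Gho : gcar T -> stF T.
Arguments Zero {T}.

Section Ops.
Variable T : ordAbGroup.

Definition sadd (x y : stF T) : stF T :=
  match x, y with
  | Zero, _ => y
  | _, Zero => x
  | (Tan a | Gho a), (Tan b | Gho b) =>
      if a == b then Gho a
      else if gle a b then y else x
  end.

Definition smul (x y : stF T) : stF T :=
  match x, y with
  | Tan a, Tan b => Tan (gmul a b)
  | Tan a, Gho b | Gho a, Tan b | Gho a, Gho b => Gho (gmul a b)
  | _, _ => Zero
  end.

Definition sone : stF T := Tan (gone T).

Definition is_tangible (x : stF T) : bool := if x is Tan _ then true else false.
Definition is_ghost_or_zero (x : stF T) : bool :=
  match x with Tan _ => false | _ => true end.
Definition is_tangible_or_zero (x : stF T) : bool :=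
  match x with Gho _ => false | _ => true end.

Definition smxmul n (A B : 'M[stF T]_n) : 'M[stF T]_n :=
  \matrix_(i, j) \big[sadd/Zero]_(k < n) smul (A i k) (B k j).

Definition smx1 n : 'M[stF T]_n :=
  \matrix_(i, j) (if i == j then sone else Zero).

Definition smxpow n (A : 'M[stF T]_n) (m : nat) : 'M[stF T]_n :=
  iter m (smxmul A) (smx1 n).

Definition smxvec n (A : 'M[stF T]_n) (v : 'cV[stF T]_n) : 'cV[stF T]_n :=
  \col_i \big[sadd/Zero]_(k < n) smul (A i k) (v k ord0).

Definition sdet n (A : 'M[stF T]_n) : stF T :=
  \big[sadd/Zero]_(s : 'S_n) \big[smul/sone]_(i < n) A i (s i).

Definition snonsingular n (A : 'M[stF T]_n) : bool := is_tangible (sdet A).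

Definition strongly_nonsingular n (A : 'M[stF T]_n) : Prop :=
  forall m : nat, snonsingular (smxpow A m).

Definition tangible_vec n (v : 'cV[stF T]_n) : bool :=
  [forall i, is_tangible_or_zero (v i ord0)].
Definition ghost_vec n (v : 'cV[stF T]_n) : bool :=
  [forall i, is_ghost_or_zero (v i ord0)].
Definition nonzero_vec n (v : 'cV[stF T]_n) : Prop := exists i, v i ord0 <> Zero.

Definition degenerate_gen_eigenvector n (A : 'M[stF T]_n) (v : 'cV[stF T]_n) : Prop :=
  tangible_vec v /\ exists m : nat, ghost_vec (smxvec (smxpow A m) v).
End Ops.

(* Main.v *)
From HB Require Import structures.
Require Import Defs.
From mathcomp Require Import all_boot all_order all_algebra all_fingroup.
Set Implicit Arguments. Unset Strict Implicit. Unset Printing Implicit Defensive.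

Section S.
Variable T : ordAbGroup.
Implicit Types x y z : stF T.

Definition nle x y : bool :=
  match x, y with
  | Zero, _ => true
  | _, Zero => false
  | (Tan a | Gho a), (Tan b | Gho b) => gle a b
  end.

Definition nlt x (a : gcar T) : bool :=
  match x with Zero => true | Tan b | Gho b => (b != a) && gle b a end.

Lemma nle_trans y x z : nle x y -> nle y z -> nle x z.
Proof.
case: x => [|a|a]; case: y => [|b|b]; case: z => [|c|c] //=; exact: gle_trans.
Qed.

Lemma nle_refl x : nle x x.
Proof. case: x => [|a|a] //=; exact: gle_refl. Qed.

Lemma gle_tot (a b : gcar T) : ~~ gle a b -> gle b a.
Proof. move=> h; by case/orP: (gle_total a b) => //; rewrite (negbTE h). Qed.

Lemma nle_nlt x y a : nle x y -> nlt y a -> nlt x a.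
Proof.
case: x => [|d|d]; case: y => [|c|c] //= hdc /andP[/eqP ca hca];
 apply/andP; split; try exact: gle_trans hdc hca.
all: apply/eqP => da; subst d; apply: ca; apply: gle_anti; by rewrite hca hdc.
Qed.

Lemma sadd_gel x y : nle x (sadd x y).
Proof.
case: x => [|a|a]; case: y => [|b|b] //=; try exact: gle_refl;
case: eqP => [->|ne]; rewrite /= ?gle_refl //; case: ifP => //= _; exact: gle_refl.
Qed.

Lemma sadd_ger x y : nle y (sadd x y).
Proof.
case: x => [|a|a]; case: y => [|b|b] //=; try exact: gle_refl;
case: eqP => [->|ne]; rewrite /= ?gle_refl //; case: ifP => //= h; try exact: gle_refl;
exact: gle_tot (negbT h).
Qed.

Lemma sadd_le x y : nle (sadd x y) x || nle (sadd x y) y.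
Proof.
case: x => [|a|a]; case: y => [|b|b] //=; rewrite ?gle_refl ?orbT //;
case: eqP => [->|ne]; rewrite /= ?gle_refl //; case: ifP => //= h; rewrite gle_refl ?orbT //.
Qed.

Lemma sadd_x0 x : sadd x Zero = x.
Proof. by case: x. Qed.

Lemma sadd_TanP x y a : sadd x y = Tan a ->
  (nlt x a /\ y = Tan a) \/ (x = Tan a /\ nlt y a).
Proof.
case: x => [|b|b]; case: y => [|c|c] //=; try by [left | right].
all: case: eqP => // ne; case: ifP => h // [<-].
all: first [ left; split => //; rewrite h andbT; exact/eqP
           | right; split => //; rewrite (gle_tot (negbT h)) andbT; apply/eqP => e; exact: ne (esym e) ].
Qed.

Lemma sadd_gzA c y : is_ghost_or_zero (sadd (Tan c) y) -> y <> Zero /\ nle (Tan c) y.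
Proof.
case: y => [|b|b] //=; case: eqP => [->|ne]; rewrite ?gle_refl //; case: ifP => //.
Qed.

Lemma sadd_gzB x d : is_ghost_or_zero (sadd x (Tan d)) -> x <> Zero /\ nle (Tan d) x.
Proof.
case: x => [|b|b] //=; case: eqP => [->|ne]; rewrite ?gle_refl //; case: ifP => // h _;
split => //; exact: gle_tot (negbT h).
Qed.

Variable I : eqType.
Variable F : I -> stF T.
Definition ssum (r : seq I) := \big[@sadd T/Zero]_(i <- r) F i.

Lemma ssum_cons i r : ssum (i :: r) = sadd (F i) (ssum r).
Proof. by rewrite /ssum big_cons. Qed.

Lemma ssum_ge r i : i \in r -> nle (F i) (ssum r).
Proof.
elim: r => // j r IH; rewrite inE ssum_cons; case/orP=> [/eqP->|/IH h].
  exact: sadd_gel.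
exact: nle_trans h (sadd_ger _ _).
Qed.

Lemma ssum_tan r a : ssum r = Tan a ->
  exists2 i, i \in r & F i = Tan a /\ forall j, j \in r -> j != i -> nlt (F j) a.
Proof.
elim: r => [|j r IH]; first by rewrite /ssum big_nil.
rewrite ssum_cons; case/sadd_TanP => [[hj hs]|[hj hs]].
  case/IH: hs => i ir [Fi hi]; exists i; first by rewrite inE ir orbT.
  split=> // k; rewrite inE; case/orP=> [/eqP->|kr]; first by [].
  exact: hi.
exists j; first exact: mem_head.
split=> // k; rewrite inE; case/orP=> [/eqP->|kr]; first by rewrite eqxx.
move=> _; exact: nle_nlt (ssum_ge kr) hs.
Qed.

Lemma ssum_max r : ssum r <> Zero -> exists2 k, k \in r & nle (ssum r) (F k).
Proof.
elim: r => [|j r IH]; first by rewrite /ssum big_nil.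
rewrite ssum_cons => hz.
have [e|ne] : ssum r = Zero \/ ssum r <> Zero by case: (ssum r); [left|right|right].
  by exists j; rewrite ?mem_head // e sadd_x0 nle_refl.
case/IH: ne => k kr hk.
case/orP: (sadd_le (F j) (ssum r)) => h.
  by exists j; rewrite ?mem_head.
by exists k; rewrite ?inE ?kr ?orbT //; exact: nle_trans h hk.
Qed.

Lemma nle_nz x y : x <> Zero -> nle x y -> y <> Zero.
Proof. by case: x => // a _; case: y. Qed.

Lemma ssum_gz r i0 c : uniq r -> is_ghost_or_zero (ssum r) -> i0 \in r -> F i0 = Tan c ->
  exists2 k, k \in r & [/\ k != i0, F k <> Zero & nle (Tan c) (F k)].
Proof.
elim: r => [|j r IH] //= /andP[jr ur]; rewrite ssum_cons inE => hg.
case: (eqVneq i0 j) => [->|ne] /= hin Fi.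
  rewrite Fi in hg; case/sadd_gzA: hg => nz hc.
  case: (ssum_max nz) => k kr hk; exists k; first by rewrite inE kr orbT.
  split; first by apply: contraNneq jr => <-.
  - exact: nle_nz nz hk.
  - exact: nle_trans hc hk.
case Es: (ssum r) hg => [|d|d] hg.
- case: (IH ur _ hin Fi) => [|k kr hk]; first by rewrite Es.
  by exists k; rewrite ?inE ?kr ?orbT.
- have hc : nle (Tan c) (Tan d) by rewrite -Es -Fi ssum_ge.
  case/sadd_gzB: hg => nz hd; exists j; first exact: mem_head.
  split; [by rewrite eq_sym | by [] | exact: nle_trans hc hd].
- case: (IH ur _ hin Fi) => [|k kr hk]; first by rewrite Es.
  by exists k; rewrite ?inE ?kr ?orbT.
Qed.
End S.
Section P.
Variable T : ordAbGroup.
Implicit Types x y : stF T.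
Definition nu0 x : gcar T := match x with Zero => gone T | Tan a | Gho a => a end.

Lemma smul_nz x y : x <> Zero -> y <> Zero -> smul x y <> Zero /\ nu0 (smul x y) = gmul (nu0 x) (nu0 y).
Proof. by case: x => // a _; case: y. Qed.

Lemma smul_nzl x y : smul x y <> Zero -> x <> Zero /\ y <> Zero.
Proof. by case: x => [|a|a]; case: y. Qed.

Lemma smul_tan x y : is_tangible (smul x y) -> is_tangible x /\ is_tangible y.
Proof. by case: x => [|a|a]; case: y. Qed.

Lemma nle_nu0 x y : x <> Zero -> y <> Zero -> nle x y = gle (nu0 x) (nu0 y).
Proof. by case: x => // a _; case: y. Qed.

Lemma tan_nz x : is_tangible x -> x <> Zero.
Proof. by case: x. Qed.

Variable I : eqType.
Variable G : I -> stF T.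
Definition sprod (r : seq I) := \big[@smul T/sone T]_(i <- r) G i.

Lemma sprod_tan r : is_tangible (sprod r) -> forall i, i \in r -> is_tangible (G i).
Proof.
elim: r => [|j r IH] // h i; rewrite /sprod big_cons in h; rewrite inE.
case/smul_tan: h => h1 h2; case/orP=> [/eqP->//|]; exact: IH.
Qed.

Lemma sprod_nz r : (forall i, i \in r -> G i <> Zero) ->
  sprod r <> Zero /\ nu0 (sprod r) = \big[@gmul T/gone T]_(i <- r) nu0 (G i).
Proof.
elim: r => [|j r IH] h; first by rewrite /sprod !big_nil.
rewrite /sprod !big_cons.
have [h1 h2] : sprod r <> Zero /\ nu0 (sprod r) = \big[@gmul T/gone T]_(i <- r) nu0 (G i).
  by apply: IH => i ir; apply: h; rewrite inE ir orbT.
have hj : G j <> Zero by apply: h; exact: mem_head.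
case: (smul_nz hj h1) => h3 ->; by rewrite -h2.
Qed.
End P.

Section G.
Variable T : ordAbGroup.
Implicit Types x y z : gcar T.
Lemma gle_mulr x y z : gle x y -> gle (gmul x z) (gmul y z).
Proof. by rewrite ![gmul _ z]gmulC; exact: gle_mul. Qed.
Lemma gle_mul2 x y x' y' : gle x y -> gle x' y' -> gle (gmul x x') (gmul y y').
Proof. move=> h1 h2; apply: gle_trans (gle_mulr x' h1) (gle_mul y h2). Qed.
Lemma gmulK x z : gmul (gmul x z) (ginv z) = x.
Proof. by rewrite -gmulA (gmulC z) gmulV gmulC gmul1. Qed.
Lemma gle_cancel x y z : gle (gmul x z) (gmul y z) -> gle x y.
Proof. by move/(gle_mulr (ginv z)); rewrite !gmulK. Qed.

HB.instance Definition _ := Monoid.isComLaw.Build (gcar T) (gone T) (@gmul T) (@gmulA T) (@gmulC T) (@gmul1 T).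

Lemma gle_big (I : eqType) (r : seq I) (F G : I -> gcar T) : (forall i, gle (F i) (G i)) ->
  gle (\big[@gmul T/gone T]_(i <- r) F i) (\big[@gmul T/gone T]_(i <- r) G i).
Proof.
move=> h; elim: r => [|j r IH]; first by rewrite !big_nil gle_refl.
rewrite !big_cons; exact: gle_mul2.
Qed.
End G.
Lemma iter_mul (T : Type) (f : T -> T) K a m : iter K f a = a -> iter (K * m) f a = a.
Proof.
move=> h; elim: m => [|m IH]; first by rewrite muln0.
by rewrite mulnS iterD IH h.
Qed.

Lemma cyc n (S : pred 'I_n) (f : 'I_n -> 'I_n) (j0 : 'I_n) :
  S j0 -> (forall j, S j -> S (f j) /\ f j != j) -> (forall j, ~~ S j -> f j = j) ->
  exists rho : 'S_n, (exists j, rho j != j) /\ forall j, rho j = j \/ rho j = f j.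
Proof.
move=> Sj0 hS hnS.
pose R j := [exists k : 'I_n.+1, (0 < k) && (iter k f j == j)].
have RP j : R j -> exists2 K, 0 < K & iter K f j = j.
  by case/existsP=> k /andP[k0 /eqP hk]; exists k.
have Rf j : R j -> R (f j).
  case/existsP=> k /andP[k0 /eqP hk]; apply/existsP; exists k.
  by rewrite k0 -iterSr iterS hk eqxx.
pose rho0 j := if R j then f j else j.
have inj : injective rho0.
  have key a b : R a -> R b -> f a = f b -> a = b.
    case/RP=> Ka Ka0 ha; case/RP=> Kb Kb0 hb e.
    have Ea := iter_mul Kb ha; have Eb := iter_mul Ka hb.
    rewrite mulnC in Eb.
    have hK : 0 < Ka * Kb by rewrite muln_gt0 Ka0 Kb0.
    move: Ea Eb; rewrite -(prednK hK) !iterSr e => -> ->; done.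
  move=> a b; rewrite /rho0.
  case Ra: (R a); case Rb: (R b) => //.
  - exact: key.
  - by move=> e; move: (Rf _ Ra); rewrite e Rb.
  - by move=> e; move: (Rf _ Rb); rewrite -e Ra.
exists (perm inj); split; last first.
  by move=> j; rewrite permE /rho0; case: (R j); [right|left].
(* find recurrent point in S *)
pose g (k : 'I_n.+1) := iter k f j0.
have gS k : S (iter k f j0).
  by elim: k => [|k IH] //=; case: (hS _ IH).
have : ~~ injectiveb g.
  apply/negP => /injectiveP ig; have := leq_card _ ig; by rewrite !card_ord ltnn.
move/injectivePn => [p [q pq epq]].
wlog lpq : p q pq epq / p < q.
  move=> W; case: (ltngtP p q) => h; first exact: W h.
  - apply: (W q p) => //; by rewrite eq_sym.
  - by move: pq; rewrite (val_inj h) eqxx.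
exists (iter p f j0); rewrite permE /rho0.
have Rj : R (iter p f j0).
  apply/existsP; have hq : q - p < n.+1 by apply: leq_ltn_trans (leq_subr _ _) (ltn_ord q).
  exists (Ordinal hq) => /=; rewrite subn_gt0 lpq /=.
  by rewrite -iterD subnK ?(ltnW lpq) //; apply/eqP; exact: esym epq.
by rewrite Rj; case: (hS _ (gS p)).
Qed.

Theorem lemma3p13 (T : ordAbGroup) (n : nat) (A : 'M[stF T]_n) :
  strongly_nonsingular A ->
  ~ (exists v : 'cV[stF T]_n, nonzero_vec v /\ degenerate_gen_eigenvector A v).
Proof.
move=> hA [v [[i0 hi0] [tv [m gv]]]].
set B := smxpow A m in gv.
have hB := hA m; rewrite -/B /snonsingular /sdet in hB.
pose P (s : 'S_n) := \big[@smul T/sone T]_(i < n) B i (s i).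
case E : (\big[@sadd T/Zero]_(s : 'S_n) P s) hB => [|a|a] // _.
have [sg _ [Psg hsg]] := ssum_tan (F := P) (r := index_enum _) E.
have Btan : forall i, is_tangible (B i (sg i)).
  move=> i; apply: (sprod_tan (G := fun i => B i (sg i)) (r := index_enum _)).
    by rewrite /sprod -/(P sg) Psg.
  exact: mem_index_enum.
pose w j := v j ord0.
have wtz : forall j, is_tangible_or_zero (w j) by move=> j; move/forallP: tv; apply.
pose S := fun j => is_tangible (w j).
have wnz : forall j, w j <> Zero -> S j.
  by move=> j; rewrite /S; move: (wtz j); case: (w j).
have hrow : forall j, exists k : 'I_n, (S j -> [/\ k != j,
      smul (B ((sg^-1)%g j) k) (w k) <> Zero &
      nle (smul (B ((sg^-1)%g j) j) (w j)) (smul (B ((sg^-1)%g j) k) (w k))])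
     /\ (~~ S j -> k = j).
  move=> j; case Sj: (S j); last by exists j; split.
  set i := (sg^-1)%g j.
  have sgi : sg i = j by rewrite /i permKV.
  have gi : is_ghost_or_zero (\big[@sadd T/Zero]_(k < n) smul (B i k) (w k)).
    by move/forallP: gv => /(_ i); rewrite mxE.
  have := Btan i; rewrite sgi.
  move: Sj; rewrite /S; case Ew: (w j) => [|b|b] //; case Eb: (B i j) => [|c|c] // _ _.
  have [|k _ [k1 k2 k3]] := ssum_gz (F := fun k => smul (B i k) (w k)) (r := index_enum _)
        (i0 := j) (c := gmul c b) (index_enum_uniq _) gi (mem_index_enum _).
    by rewrite /= Ew Eb.
  exists k; split => // _; split => //; by rewrite Eb Ew.
have [f hf] := fin_all_exists hrow.
have [j0 Sj0] : exists j, S j by exists i0; apply: wnz.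
have [rho [[j1 hj1] hrho]] : exists rho : 'S_n, (exists j, rho j != j) /\ forall j, rho j = j \/ rho j = f j.
  apply: (cyc Sj0).
    move=> j Sj; case: (hf j) => /(_ Sj) [k1 k2 _] _; split => //.
    by case: (smul_nzl k2) => _ /wnz.
  by move=> j nSj; case: (hf j) => _ /(_ nSj).
pose tau := (sg * rho)%g.
have tauE i : tau i = rho (sg i) by rewrite permM.
have tsg : tau != sg.
  apply/eqP => e; move/eqP: hj1; apply.
  by have := tauE ((sg^-1)%g j1); rewrite e permKV.
have hlt := hsg tau (mem_index_enum _) tsg.
have rowP i : B i (tau i) <> Zero /\
   gle (gmul (nu0 (B i (sg i))) (nu0 (w (sg i)))) (gmul (nu0 (B i (tau i))) (nu0 (w (tau i)))).
  rewrite tauE; have [e|ne] := eqVneq (rho (sg i)) (sg i).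
    by rewrite e; split; [exact: tan_nz | exact: gle_refl].
  have e : rho (sg i) = f (sg i) by case: (hrho (sg i)) => // /eqP; rewrite (negbTE ne).
  have Sj : S (sg i).
    apply/negPn/negP => nS; case: (hf (sg i)) => _ /(_ nS) fe.
    by rewrite e fe eqxx in ne.
  case: (hf (sg i)) => /(_ Sj) [k1 k2 k3] _; rewrite permK in k2 k3; rewrite e.
  case: (smul_nzl k2) => b1 w1; split => //.
  have wj : w (sg i) <> Zero := tan_nz Sj.
  have bj := tan_nz (Btan i).
  rewrite (nle_nu0 (smul_nz bj wj).1 k2) in k3.
  by rewrite -(smul_nz bj wj).2 -(smul_nz b1 w1).2.
have [Ptz Ptv] := sprod_nz (G := fun i => B i (tau i)) (r := index_enum _) (fun i _ => (rowP i).1).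
have [_ Psv] := sprod_nz (G := fun i => B i (sg i)) (r := index_enum _) (fun i _ => tan_nz (Btan i)).
have hle := @gle_big T _ (index_enum 'I_n) _ _ (fun i => (rowP i).2).
rewrite !big_split /= in hle.
have r1 : \big[@gmul T/gone T]_(i < n) nu0 (w (tau i)) = \big[@gmul T/gone T]_(i < n) nu0 (w i).
  by rewrite [RHS](reindex_inj (@perm_inj _ tau)).
have r2 : \big[@gmul T/gone T]_(i < n) nu0 (w (sg i)) = \big[@gmul T/gone T]_(i < n) nu0 (w i).
  by rewrite [RHS](reindex_inj (@perm_inj _ sg)).
rewrite r1 r2 in hle.
have ha := gle_cancel hle.
rewrite -Psv -Ptv in ha.
have ha2 : gle a (nu0 (P tau)).
  by rewrite -[a]/(nu0 (Tan a)) -Psg; exact: ha.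
clear ha.
change (P tau <> Zero) in Ptz.
move: hlt ha2 Ptz; case: (P tau) => [|b|b] //= /andP[/eqP nb hb] ab _;
  apply: nb; apply: gle_anti; by rewrite hb ab.
Qed.
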